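(* Let $\mathcal{L}(W;g)$ be a real-valued function of parameters $W=\{w^{(1)},\dots,w^{(m)}\}$ (vectors) and $g$, which is twice continuously differentiable at every point with all $w^{(j)}\neq0$, and such that each $w^{(j)}$ is scale-invariant: $\mathcal{L}(\dots,c\,w^{(j)},\dots)=\mathcal{L}(\dots,w^{(j)},\dots)$ for all $c>0$. Fix $i$ and suppose that for every $(V;g)$ with all $\|v^{(j)}\|_2=1$, the Hessian of $\mathcal{L}$ with respect to the block $w^{(i)}$ at $(V;g)$ has spectral norm at most $L^{\mathrm{vv}}_{ii}$. Then for any $W$ (with all $w^{(j)}\neq0$) and $g$, $$\left\|\nabla_{w^{(i)}}\mathcal{L}(W;g)\right\|_2\le\frac{\pi L^{\mathrm{vv}}_{ii}}{\|w^{(i)}\|_2}.$$ *)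

(* Defs.v *)
From HB Require Import structures.
From mathcomp Require Import all_boot all_order all_algebra.
From mathcomp Require Import all_classical all_reals all_analysis.
Set Implicit Arguments. Unset Strict Implicit. Unset Printing Implicit Defensive.
Import Order.TTheory GRing.Theory Num.Theory.
Import numFieldNormedType.Exports.
Local Open Scope classical_set_scope.
Local Open Scope ring_scope.

(* The full parameter (W; g) is a vector x in R^N, split into blocks by
   blk : 'I_N -> option 'I_m : coordinate k belongs to w^(j) if blk k = Some j,
   and to g if blk k = None. *)

Section Defs.
Variables (R : realType) (N m : nat).
Notation V := 'rV[R]_N.

Definition ev (k : 'I_N) : V := delta_mx 0 k.

Definition partial (f : V -> R) (k : 'I_N) : V -> R := fun x => 'D_(ev k) f x.

Definition norm2 (v : V) : R := Num.sqrt (\sum_k v 0 k ^+ 2).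

Definition C2_on (U : set V) (f : V -> R) : Prop :=
  forall x, U x ->
    {for x, continuous f} /\
    forall k, derivable f x (ev k) /\ {for x, continuous (partial f k)} /\
      forall l, derivable (partial f k) x (ev l) /\
                {for x, continuous (partial (partial f k) l)}.

Variable blk : 'I_N -> option 'I_m.

Definition blockvec (b : option 'I_m) (x : V) : V :=
  \row_k (if blk k == b then x 0 k else 0).

Definition dom_nz : set V := fun x => forall j : 'I_m, blockvec (Some j) x != 0.

Definition scale_block (j : 'I_m) (c : R) (x : V) : V :=
  \row_k (if blk k == Some j then c * x 0 k else x 0 k).

Definition grad_block (f : V -> R) (i : 'I_m) (x : V) : V :=
  \row_k (if blk k == Some i then partial f k x else 0).

Definition hess_block (f : V -> R) (i : 'I_m) (x : V) : 'M[R]_N :=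
  \matrix_(k, l) (if (blk k == Some i) && (blk l == Some i)
                  then partial (partial f l) k x else 0).

End Defs.

Definition mxv (R : realType) (N : nat) (A : 'M[R]_N) (v : 'rV[R]_N) : 'rV[R]_N :=
  \row_k \sum_l A k l * v 0 l.

Definition specnorm (R : realType) (N : nat) (A : 'M[R]_N) : R :=
  sup [set norm2 (mxv A v) | v in [set v : 'rV[R]_N | norm2 v = 1]].

(* Main.v *)
Require Import Defs.
From HB Require Import structures.
From mathcomp Require Import all_boot all_order all_algebra.
From mathcomp Require Import all_classical all_reals all_analysis.
From mathcomp Require Import ring lra.
Import Order.TTheory GRing.Theory Num.Theory.
Import numFieldNormedType.Exports.
Local Open Scope classical_set_scope.
Local Open Scope ring_scope.

Section S.
Variables (R : realType) (N : nat).
Local Notation V := 'rV[R]_N.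

Lemma line_derive (F : V -> R) (z v : V) (s : R) :
  derivable F (z + s *: v) v ->
  is_derive s 1 (fun t => F (z + t *: v)) ('D_v F (z + s *: v)).
Proof.
move=> d.
have E : (fun h : R => h^-1 *: (((fun t => F (z + t *: v)) \o shift s) (h *: 1) - F (z + s *: v))) =
  (fun h : R => h^-1 *: ((F \o shift (z + s *: v)) (h *: v) - F (z + s *: v))).
  by apply/funext => h /=; rewrite [h *: 1]mulr1 scalerDl addrCA addrA.
apply: DeriveDef; rewrite /derivable /derive; rewrite E //.
Qed.

Lemma ball_mxP (x y : V) e : ball x e y <-> 0 < e /\ forall k, `|x 0 k - y 0 k| < e.
Proof.
rewrite -ball_normE /=.
have -> : `|x - y| = mx_norm (x - y) by [].
rewrite mx_normrE.
split.
  move=> H; have e0 : 0 < e.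
    apply: le_lt_trans H; elim/big_ind: _ => //=.
    by move=> a b ha hb; rewrite le_max ha.
  split => // k; apply: le_lt_trans H; apply: le_trans (le_bigmax _ _ (0, k)).
  by rewrite !mxE.
move=> [e0 H]; apply/bigmax_ltP; split => // -[a b] _ /=.
by rewrite (ord1 a) !mxE.
Qed.

Lemma lin_der (c x : R) : is_derive x 1 (fun s : R => s * c) c.
Proof.
have H := @is_deriveM R R id (cst c) x 1 1 0 _ _.
rewrite /= scaler0 add0r /GRing.scale /= mulr1 in H.
exact: H.
Qed.

Lemma mvi (g dg : R -> R) (a c e : R) :
  (forall t, 0 <= t <= 1 -> is_derive (t * a) 1 g (dg (t * a)) /\ `|dg (t * a) - c| <= e) ->
  `|g a - g 0 - a * c| <= e * `|a|.
Proof.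
move=> H.
have e0 : 0 <= e.
  have [|_ h1] := H 0; first by rewrite lexx ler01.
  exact: le_trans (normr_ge0 _) h1.
pose h s := g s - s * c.
have hd s : (exists2 t, 0 <= t <= 1 & s = t * a) -> is_derive s 1 h (dg s - c) /\ `|dg s - c| <= e.
  move=> [t tI ->]; have [d1 d2] := H t tI; split => //.
  by apply: is_deriveB; exact: lin_der.
have E : g a - g 0 - a * c = h a - h 0 by rewrite /h mul0r subr0 addrAC.
rewrite E.
have [a0|a0|->] := ltgtP a 0; last by rewrite subrr !normr0 mulr0.
- have inI s : a <= s <= 0 -> exists2 t, 0 <= t <= 1 & s = t * a.
    move=> /andP[s1 s2]; exists (s / a); last by rewrite divfK // lt_eqF.
    apply/andP; split; first by rewrite ler_ndivlMr // mul0r.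
    by rewrite ler_ndivrMr // mul1r.
  have cont : {within `[a, 0], continuous h}.
    apply: derivable_within_continuous => s; rewrite in_itv /= => sI.
    by have [d _] := hd s (inI s sI); exact: ex_derive.
  have [x xI Ex] := MVT_segment (ltW a0)
     (fun s sI => (hd s (inI s (subset_itv_oo_cc sI))).1) cont.
  rewrite distrC Ex normrM sub0r normrN ler_wpM2r //.
  by apply: (hd x (inI x _)).2; move: xI; rewrite in_itv.
- have inI s : 0 <= s <= a -> exists2 t, 0 <= t <= 1 & s = t * a.
    move=> /andP[s1 s2]; exists (s / a); last by rewrite divfK // gt_eqF.
    apply/andP; split; [exact: divr_ge0 s1 (ltW a0) | by rewrite ler_pdivrMr // mul1r].
  have cont : {within `[0, a], continuous h}.
    apply: derivable_within_continuous => s; rewrite in_itv /= => sI.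
    by have [d _] := hd s (inI s sI); exact: ex_derive.
  have [x xI Ex] := MVT_segment (ltW a0)
     (fun s sI => (hd s (inI s (subset_itv_oo_cc sI))).1) cont.
  rewrite Ex normrM subr0 ler_wpM2r //.
  by apply: (hd x (inI x _)).2; move: xI; rewrite in_itv.
Qed.

Lemma ev_mxE (j k : 'I_N) : (ev R j : V) 0 k = (j == k)%:R.
Proof. by rewrite /ev mxE eqxx /= eq_sym. Qed.

Lemma chain (F : V -> R) (p : R -> V) (dp : V) (t0 : R) :
  (\forall y \near p t0, forall k, derivable F y (ev R k)) ->
  (forall k, {for p t0, continuous (partial F k)}) ->
  (forall k, is_derive t0 1 (fun t => p t 0 k) (dp 0 k)) ->
  is_derive t0 1 (F \o p) (\sum_k partial F k (p t0) * dp 0 k).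
Proof.
move=> Hd Hc Hp.
set P0 := p t0.
pose a h := p (h + t0) - P0.
have Ha k : (fun h => h^-1 * a h 0 k) @ 0^' --> dp 0 k.
  have [d v] := Hp k; rewrite -v.
  have E : (fun h => h^-1 * a h 0 k) =
    (fun h => h^-1 *: (((fun t => p t 0 k) \o shift t0) (h *: 1) - p t0 0 k)).
    by apply/funext => h; rewrite /a !mxE /= [h *: 1]mulr1.
  by rewrite E; exact: d.
pose y (j : nat) h : V := P0 + \row_k (if (k < j)%N then a h 0 k else 0).
have y0 h : y 0%N h = P0.
  by rewrite /y; apply/rowP => k; rewrite !mxE addr0.
have yN h : y N h = p (h + t0).
  rewrite /y; apply/rowP => k; rewrite !mxE ltn_ord.
  by rewrite addrC subrK.
have yS (j : 'I_N) h : y j.+1 h = y j h + a h 0 j *: ev R j.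
  rewrite /y -addrA; congr (_ + _); apply/rowP => k; rewrite !mxE eqxx /=.
  case: (ltngtP k j) => [kj|jk|kj].
  - have kj' : k != j by rewrite -val_eqE /= ltn_eqF.
    by rewrite ltnS (ltnW kj) (negPf kj') mulr0 addr0.
  - have kj' : k != j by rewrite -val_eqE /= gtn_eqF.
    by rewrite ltnS leqNgt jk /= (negPf kj') mulr0 addr0.
  - have kj' : k = j by apply/val_inj.
    by rewrite kj' ltnSn eqxx mulr1 add0r.
pose c k := partial F k P0.
pose D (j : 'I_N) h := F (y j.+1 h) - F (y j h) - a h 0 j * c j.
have Qsplit h : h^-1 * (F (p (h + t0)) - F P0) =
   \sum_j c j * (h^-1 * a h 0 j) + \sum_j h^-1 * D j h.
  rewrite -yN -(y0 h) -(telescope_sumr (fun j => F (y j h)) (leq0n N)) big_mkord mulr_sumr -big_split.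
  apply: eq_bigr => j _ /=; rewrite /D; ring.
pose L := \sum_k c k * dp 0 k.
have S1 : (fun h => \sum_j c j * (h^-1 * a h 0 j)) @ 0^' --> L.
  apply: (cvg_big add_continuous) => // j _.
  exact: cvgMr (Ha j).
have S2 : (fun h => \sum_j h^-1 * D j h) @ 0^' --> 0.
  apply/cvgr0Pnorm_le => eps eps0.
  pose M := \sum_j (`|dp 0 j| + 1) + 1.
  have M0 : 0 < M by rewrite /M ltr_wpDl // sumr_ge0 // => j _; rewrite addr_ge0.
  pose e := eps / M.
  have e0 : 0 < e by rewrite divr_gt0.
  have : \forall z \near P0, (forall k, derivable F z (ev R k)) /\
                              forall k, `|c k - partial F k z| <= e.
    near=> z; split; first by near: z; exact: Hd.
    near: z; apply: filter_forall => k.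
    exact: ((cvgrPdist_le _ _).1 (Hc k) e e0).
  move=> /nbhs_ballP [del /= del0 Hball].
  have Dbound h j : (forall k, `|a h 0 k| < del) -> `|D j h| <= e * `|a h 0 j|.
    move=> Hs.
    have := @mvi (fun s => F (y j h + s *: ev R j))
      (fun s => partial F j (y j h + s *: ev R j)) (a h 0 j) (c j) e.
    rewrite /= scale0r addr0 -yS; apply => t /andP[t0' t1].
    have zb : ball P0 del (y j h + (t * a h 0 j) *: ev R j).
      apply/ball_mxP; split => // k; apply: le_lt_trans (Hs k).
      rewrite /y !mxE eqxx /=.
      case: (ltngtP k j) => [kj|jk|kj].
      - have -> : (k == j) = false by rewrite -val_eqE /= ltn_eqF.
        by rewrite mulr0 addr0 opprD addrA subrr sub0r normrN.
      - have -> : (k == j) = false by rewrite -val_eqE /= gtn_eqF.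
        by rewrite mulr0 !addr0 subrr normr0.
      - have kj' : k = j by apply/val_inj.
        rewrite kj' eqxx mulr1 addr0 opprD addrA subrr sub0r normrN normrM.
        by rewrite ger0_norm // ler_piMl.
    have [Hz1 Hz2] := Hball _ zb.
    split; last by rewrite distrC.
    exact: line_derive.
  have Hb : \forall h \near 0^', forall k, `|h^-1 * a h 0 k| <= `|dp 0 k| + 1.
    apply: filter_forall => k; near=> h.
    have H1 : `|dp 0 k - h^-1 * a h 0 k| <= 1.
      by near: h; exact: ((cvgrPdist_le _ _).1 (Ha k) 1 ltr01).
    rewrite -(subrK (dp 0 k) (h^-1 * a h 0 k)).
    by apply: le_trans (ler_normD _ _) _; rewrite addrC distrC lerD2l.
  have dpM k : `|dp 0 k| + 1 <= M.
    rewrite /M (bigD1 k) //= -addrA lerDl; apply: addr_ge0 => //.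
    by apply: sumr_ge0 => ? _; rewrite addr_ge0.
  near=> h.
  have hn0 : h != 0 by near: h; exact: nbhs_dnbhs_neq.
  have hs : `|h| < del / M by near: h; apply: dnbhs0_lt; rewrite divr_gt0.
  have Hb' : forall k, `|h^-1 * a h 0 k| <= `|dp 0 k| + 1 by near: h; exact: Hb.
  have Hs k : `|a h 0 k| < del.
    rewrite -(mulVKf hn0 (a h 0 k)) normrM.
    apply: le_lt_trans (ler_wpM2l (normr_ge0 _) (le_trans (Hb' k) (dpM k))) _.
    rewrite -ltr_pdivlMr //.
  apply: le_trans (ler_norm_sum _ _ _) _.
  apply: (@le_trans _ _ (\sum_j e * (`|dp 0 j| + 1))).
    apply: ler_sum => j _; rewrite normrM.
    apply: le_trans (ler_wpM2l (normr_ge0 _) (Dbound h j Hs)) _.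
    by rewrite mulrCA -normrM ler_wpM2l // ltW.
  rewrite -mulr_sumr /e mulrAC ler_pdivrMr // ler_wpM2l ?(ltW eps0) //.
  by rewrite /M lerDl.
have HQ : (fun h => h^-1 * (F (p (h + t0)) - F P0)) @ 0^' --> L.
  have -> : (fun h => h^-1 * (F (p (h + t0)) - F P0)) =
    (fun h => \sum_j c j * (h^-1 * a h 0 j) + \sum_j h^-1 * D j h).
    by apply/funext => h; exact: Qsplit.
  rewrite -[L]addr0; exact: cvgD S1 S2.
have E : (fun h : R => h^-1 *: ((F \o p \o shift t0) (h *: 1) - F P0)) =
   (fun h => h^-1 * (F (p (h + t0)) - F P0)).
  by apply/funext => h; rewrite /= [h *: 1]mulr1.
apply: DeriveDef.
  rewrite /derivable E; apply/cvg_ex; exists L; exact: HQ.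
rewrite /derive E; exact: cvg_lim HQ.
Unshelve. all: by end_near.
Qed.
End S.

Section H.
Variables (R : realType) (N : nat).
Local Notation V := 'rV[R]_N.

Lemma is_derive_sumf (h : 'I_N -> R -> R) (dh : 'I_N -> R) (x : R) :
  (forall k, is_derive x 1 (h k) (dh k)) ->
  is_derive x 1 (fun t => \sum_k h k t) (\sum_k dh k).
Proof.
move=> H.
have -> : (fun t => \sum_k h k t) = \sum_k h k by apply/funext => t; rewrite fct_sumE.
exact: is_derive_sum.
Qed.

Lemma is_derive_mulf (A B : R -> R) (x dA dB : R) :
  is_derive x 1 A dA -> is_derive x 1 B dB ->
  is_derive x 1 (fun t => A t * B t) (A x * dB + B x * dA).
Proof. move=> HA HB; exact: (is_deriveM HA HB). Qed.

Lemma is_derive_uniq (g : R -> R) (x d1 d2 : R) :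
  is_derive x 1 g d1 -> is_derive x 1 g d2 -> d1 = d2.
Proof. by move=> H1 H2; rewrite -(@derive_val _ _ _ _ _ _ _ H1) -(@derive_val _ _ _ _ _ _ _ H2). Qed.

Lemma CS (a b : 'I_N -> R) :
  (\sum_k a k * b k) ^+ 2 <= (\sum_k a k ^+ 2) * (\sum_k b k ^+ 2).
Proof.
set A := \sum_k a k ^+ 2; set B := \sum_k b k ^+ 2; set C := \sum_k a k * b k.
have H0 : 0 <= \sum_k \sum_l (a k * b l - a l * b k) ^+ 2.
  by apply: sumr_ge0 => k _; apply: sumr_ge0 => l _; exact: sqr_ge0.
have E : \sum_k \sum_l ((a k * b l - a l * b k) ^+ 2 + 2 * ((a k * b k) * (a l * b l)))
   = \sum_k \sum_l (a k ^+ 2 * b l ^+ 2 + b k ^+ 2 * a l ^+ 2).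
  by apply: eq_bigr => k _; apply: eq_bigr => l _; ring.
have E2 : forall (u w : 'I_N -> 'I_N -> R), \sum_k \sum_l (u k l + w k l) =
    \sum_k \sum_l u k l + \sum_k \sum_l w k l.
  by move=> u w; rewrite -big_split; apply: eq_bigr => k _; rewrite big_split.
rewrite !E2 in E.
have Ep : forall (u w : 'I_N -> R), \sum_k \sum_l u k * w l = (\sum_k u k) * (\sum_k w k).
  by move=> u w; rewrite mulr_suml; apply: eq_bigr => k _; rewrite mulr_sumr.
have EC : \sum_k \sum_l 2 * ((a k * b k) * (a l * b l)) = 2 * (C * C).
  rewrite -Ep mulr_sumr; apply: eq_bigr => k _; rewrite mulr_sumr.
  by apply: eq_bigr => l _.
rewrite EC !Ep -/A -/B [B * A]mulrC in E.
rewrite expr2; move: H0 E.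
move: (\sum_k \sum_l _) (C * C) (A * B) => s1 s2 s3; lra.
Qed.

Lemma dot_le (a b : V) :
  `|\sum_k a 0 k * b 0 k| <= norm2 a * norm2 b.
Proof.
rewrite /norm2 -sqrtrM ?sumr_ge0 // => [|k _]; last exact: sqr_ge0.
rewrite -sqrtr_sqr ler_wsqrtr //; exact: CS.
Qed.

Lemma norm2_ge0 (a : V) : 0 <= norm2 a.
Proof. exact: sqrtr_ge0. Qed.

Lemma norm2_sq (a : V) : norm2 a ^+ 2 = \sum_k a 0 k ^+ 2.
Proof. by rewrite /norm2 sqr_sqrtr // sumr_ge0 // => k _; exact: sqr_ge0. Qed.

Lemma norm2_eq1 (a : V) : norm2 a = 1 <-> \sum_k a 0 k ^+ 2 = 1.
Proof.
split; first by move=> H; rewrite -norm2_sq H expr1n.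
by move=> H; rewrite /norm2 H sqrtr1.
Qed.

Lemma norm2_eq0 (a : V) : norm2 a = 0 -> a = 0.
Proof.
move=> H; have : \sum_k a 0 k ^+ 2 = 0 by rewrite -norm2_sq H expr0n.
move/eqP; rewrite psumr_eq0 => [/allP Ha|k _]; last exact: sqr_ge0.
apply/rowP => k; rewrite mxE; apply/eqP; rewrite -sqrf_eq0.
by apply: Ha; rewrite mem_index_enum.
Qed.

Lemma norm2Z (c : R) (a : V) : norm2 (c *: a) = `|c| * norm2 a.
Proof.
rewrite /norm2 -sqrtr_sqr -sqrtrM ?sqr_ge0 // mulr_sumr; congr Num.sqrt.
by apply: eq_bigr => k _; rewrite mxE exprMn.
Qed.

Lemma coord_le (a : V) k : `|a 0 k| <= norm2 a.
Proof.
rewrite /norm2 -sqrtr_sqr ler_wsqrtr //.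
rewrite (bigD1 k) //= lerDl sumr_ge0 // => l _; exact: sqr_ge0.
Qed.

End H.

Set Implicit Arguments. Unset Strict Implicit.
Arguments is_derive_uniq {R g x d1 d2}.
Arguments dot_le {R N}. Arguments norm2_ge0 {R N}. Arguments norm2_sq {R N}.
Arguments norm2_eq1 {R N}. Arguments norm2_eq0 {R N}. Arguments norm2Z {R N}.
Arguments coord_le {R N}. Arguments is_derive_sumf {R N}. Arguments is_derive_mulf {R A B x dA dB}.
Arguments lin_der {R}. Arguments chain {R N}. Arguments line_derive {R N}. Arguments mvi {R}.
Arguments ball_mxP {R N}. Arguments CS {R N}.
Section M.
Variables (R : realType) (N m : nat) (blk : 'I_N -> option 'I_m).
Local Notation V := 'rV[R]_N.
Local Notation dom := (dom_nz blk).

Lemma blockvecE b (x : V) k : blockvec blk b x 0 k = if blk k == b then x 0 k else 0.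
Proof. by rewrite mxE. Qed.

Lemma dom_open (x : V) : dom x -> \forall y \near x, dom y.
Proof.
move=> Hx.
suff : \forall y \near x, forall j, blockvec blk (Some j) y != 0 by [].
near=> y; near: y; apply: filter_forall => j.
have [k Hk] : exists k, blockvec blk (Some j) x 0 k != 0.
  apply/existsP; apply: contraR (Hx j) => /existsPn H.
  apply/eqP/rowP => k; rewrite [RHS]mxE; exact/eqP/negbNE/H.
apply/nbhs_ballP; exists `|blockvec blk (Some j) x 0 k|; first by rewrite /= normr_gt0.
move=> y /ball_mxP [_ Hy]; apply/eqP => E0.
move: Hk (Hy k); rewrite !blockvecE.
have : blockvec blk (Some j) y 0 k = 0 by rewrite E0 mxE.
rewrite blockvecE; case: (blk k == Some j) => [-> _|_]; last by rewrite eqxx.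
by rewrite subr0 ltxx.
Unshelve. all: by end_near.
Qed.

Lemma scale_dom j c (x : V) : 0 < c -> dom x -> dom (scale_block blk j c x).
Proof.
move=> c0 Hx j'; apply: contra (Hx j') => /eqP E; apply/eqP/rowP => k.
have := congr1 (fun w : V => w 0 k) E; rewrite /= !mxE.
case: (blk k == Some j') => //; case: (blk k == Some j) => // /eqP.
by rewrite mulf_eq0 gt_eqF //= => /eqP.
Qed.

Definition scall (cs : 'I_m -> R) (P : seq 'I_m) (y : V) : V :=
  \row_k (match blk k with Some j => if j \in P then cs j * y 0 k else y 0 k | None => y 0 k end).

Lemma scall_nil cs (y : V) : scall cs [::] y = y.
Proof. by apply/rowP => k; rewrite mxE; case: (blk k). Qed.

Lemma scall_cons cs j s (y : V) : scall cs (j :: s) y =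
  if j \in s then scall cs s y else scale_block blk j (cs j) (scall cs s y).
Proof.
case: ifP => js; apply/rowP => k; rewrite !mxE; case: (blk k) => [j'|] //=; rewrite !inE.
  by case: eqP => [->|]; rewrite ?js.
case: eqP => [->|/eqP nj]; first by rewrite js eqxx.
by have -> : (Some j' == Some j) = false by apply/eqP => -[] /eqP; rewrite (negPf nj).
Qed.

Variable f : V -> R.
Hypothesis HC2 : C2_on dom f.
Hypothesis Hinv : forall (j : 'I_m) (c : R) (x : V), dom x -> 0 < c ->
     f (scale_block blk j c x) = f x.

Lemma scall_inv cs (s : seq 'I_m) (y : V) : (forall j, 0 < cs j) -> dom y ->
  dom (scall cs s y) /\ f (scall cs s y) = f y.
Proof.
move=> cs0 dy; elim: s => [|j s IH]; first by rewrite scall_nil.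
rewrite scall_cons; case: ifP => // _; have [d e] := IH.
by split; [exact: scale_dom | rewrite Hinv].
Qed.

Lemma scallT cs (y : V) k : scall cs (enum 'I_m) y 0 k =
  match blk k with Some j => cs j * y 0 k | None => y 0 k end.
Proof. by rewrite mxE; case: (blk k) => // j; rewrite mem_enum. Qed.

Lemma near_dom_f (x : V) : dom x -> \forall y \near x, forall k, derivable f y (ev R k).
Proof.
move=> dx; near=> y => k.
have dy : dom y by near: y; exact: dom_open.
by have [_ /(_ k) []] := HC2 dy.
Unshelve. all: by end_near.
Qed.

Lemma near_dom_pf (x : V) l : dom x -> \forall y \near x, forall k, derivable (partial f l) y (ev R k).
Proof.
move=> dx; near=> y => k.
have dy : dom y by near: y; exact: dom_open.
by have [_ /(_ l) [_ [_ /(_ k) []]]] := HC2 dy.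
Unshelve. all: by end_near.
Qed.

Lemma chain_f (p : R -> V) (dp : V) (t0 : R) : dom (p t0) ->
  (forall k, is_derive t0 1 (fun t => p t 0 k) (dp 0 k)) ->
  is_derive t0 1 (f \o p) (\sum_k partial f k (p t0) * dp 0 k).
Proof.
move=> dx Hp; apply: chain => //; first exact: near_dom_f.
by move=> k; have [_ /(_ k) [_ []]] := HC2 dx.
Qed.

Lemma chain_pf l (p : R -> V) (dp : V) (t0 : R) : dom (p t0) ->
  (forall k, is_derive t0 1 (fun t => p t 0 k) (dp 0 k)) ->
  is_derive t0 1 (partial f l \o p) (\sum_k partial (partial f l) k (p t0) * dp 0 k).
Proof.
move=> dx Hp; apply: chain => //; first exact: near_dom_pf.
by move=> k; have [_ /(_ l) [_ [_ /(_ k) []]]] := HC2 dx.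
Qed.

Lemma near1_pos : \forall c \near (1 : R), 0 < c.
Proof.
apply/nbhs_ballP; exists 1 => //= c; rewrite -ball_normE /= ltr_norml => /andP[_ h].
lra.
Qed.

Lemma euler i (y : V) : dom y ->
  \sum_k partial f k y * (if blk k == Some i then y 0 k else 0) = 0.
Proof.
move=> dy.
pose p c := scale_block blk i c y.
pose dp : V := \row_k (if blk k == Some i then y 0 k else 0).
have p1 : p 1 = y by apply/rowP => k; rewrite /p mxE mul1r; case: ifP.
have H1 : is_derive (1 : R) (1 : R) (f \o p) (\sum_k partial f k (p 1) * dp 0 k).
  apply: chain_f; first by rewrite p1.
  move=> k; rewrite /dp mxE.
  have -> : (fun t => p t 0 k) = (fun t => if blk k == Some i then t * y 0 k else y 0 k).
    by apply/funext => t; rewrite /p mxE.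
  case: ifP => _; first exact: lin_der.
  exact: is_derive_cst.
have H0 : is_derive (1 : R) (1 : R) (f \o p) 0.
  apply: (near_eq_is_derive _ (is_derive_cst (f y) (1 : R) (1 : R))).
  by apply: filterS near1_pos => c c0; rewrite /= /p Hinv.
have := is_derive_uniq H1 H0; rewrite p1 => E.
transitivity (\sum_k partial f k y * dp 0 k); last exact: E.
by apply: eq_bigr => k _; rewrite /dp mxE.
Qed.

Lemma near0_line (x : V) k : dom x -> \forall s \near (0 : R), dom (x + s *: ev R k).
Proof.
move=> dx; have /nbhs_ballP [d /= d0 Hd] := dom_open dx.
apply/nbhs_ballP; exists d => // s; rewrite -ball_normE /= sub0r normrN => hs.
apply: Hd; apply/ball_mxP; split => // l; rewrite !mxE eqxx /=.
case: eqP => _; last by rewrite mulr0 addr0 subrr normr0.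
by rewrite mulr1 opprD addrA subrr sub0r normrN.
Qed.

Lemma grad_rel (x : V) cs i k : dom x -> (forall j, 0 < cs j) -> blk k = Some i ->
  partial f k x = cs i * partial f k (scall cs (enum 'I_m) x).
Proof.
move=> dx cs0 bk.
set xh := scall cs (enum 'I_m) x.
pose p s := scall cs (enum 'I_m) (x + s *: ev R k).
pose dp : V := \row_l (if l == k then cs i else 0).
have p0 : p 0 = xh by rewrite /p scale0r addr0.
have dxh : dom xh by have [] := scall_inv (enum 'I_m) cs0 dx.
have H1 : is_derive (0 : R) (1 : R) (f \o p) (\sum_l partial f l (p 0) * dp 0 l).
  apply: chain_f; first by rewrite p0.
  move=> l; rewrite /dp mxE.
  have -> : (fun t => p t 0 l) =
      (fun t => t * (if l == k then cs i else 0) + xh 0 l).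
    apply/funext => t; rewrite /p /xh !scallT !mxE eqxx /=.
    case: eqP => [->|_]; last by rewrite !mulr0 !addr0 add0r.
    by rewrite bk mulr1 mulrDr addrC mulrC.
  have := is_deriveD (f := fun t : R => t * (if l == k then cs i else 0))
    (g := cst (xh 0 l)) (lin_der _ 0) (is_derive_cst _ (0 : R) (1 : R)).
  by rewrite addr0.
have H2 : is_derive (0 : R) (1 : R) (fun s => f (x + s *: ev R k)) (partial f k x).
  have := line_derive f x (ev R k) 0; rewrite scale0r addr0; apply.
  by have [_ /(_ k) []] := HC2 dx.
have H3 : is_derive (0 : R) (1 : R) (fun s => f (x + s *: ev R k)) (\sum_l partial f l (p 0) * dp 0 l).
  apply: (near_eq_is_derive _ H1).
  apply: filterS (near0_line k dx) => s ds /=.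
  by have [] := scall_inv (enum 'I_m) cs0 ds.
rewrite (is_derive_uniq H2 H3) p0 (bigD1 k) //= big1 => [|l lk].
  by rewrite /dp mxE eqxx addr0 mulrC.
by rewrite /dp mxE (negPf lk) mulr0.
Qed.

Lemma norm2_0 : norm2 (0 : V) = 0.
Proof. by rewrite /norm2 big1 ?sqrtr0 // => k _; rewrite mxE expr0n. Qed.

Lemma specnorm_ub (A : 'M[R]_N) (w : V) : norm2 w = 1 -> norm2 (mxv A w) <= specnorm A.
Proof.
move=> w1; apply: ub_le_sup; last by exists w.
exists (Num.sqrt (\sum_k \sum_l A k l ^+ 2)) => _ [z /= z1 <-].
rewrite /norm2 ler_wsqrtr // ler_sum // => k _; rewrite mxE.
apply: le_trans (CS (fun l => A k l) (fun l => z 0 l)) _.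
by move/norm2_eq1: z1 => ->; rewrite mulr1.
Qed.

Lemma specnorm_ge0 (A : 'M[R]_N) (w : V) : norm2 w = 1 -> 0 <= specnorm A.
Proof. by move=> w1; apply: le_trans (specnorm_ub A w1); exact: norm2_ge0. Qed.

Lemma quad_sum (a b : 'I_N -> R) (c s : R) :
  \sum_k (c * a k + s * b k) ^+ 2 =
  c ^+ 2 * \sum_k a k ^+ 2 + 2 * c * s * \sum_k a k * b k + s ^+ 2 * \sum_k b k ^+ 2.
Proof. by rewrite !mulr_sumr -!big_split; apply: eq_bigr => k _ /=; ring. Qed.

Lemma scal_der (h : R -> R) (dh c x : R) : is_derive x 1 h dh ->
  is_derive x 1 (fun t => h t * c) (dh * c).
Proof.
move=> H; have := is_deriveM (f := h) (g := cst c) H (is_derive_cst c x 1).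
by rewrite /GRing.scale /= mulr0 add0r [dh * c]mulrC.
Qed.

Lemma trig_der (c1 c2 c3 x : R) :
  is_derive x 1 (fun t => c1 + cos t * c2 + sin t * c3) (- sin x * c2 + cos x * c3).
Proof.
have H := is_deriveD (is_deriveD (is_derive_cst c1 x 1) (scal_der c2 (is_derive_cos x)))
  (scal_der c3 (is_derive_sin x)).
by rewrite add0r in H.
Qed.

Lemma trig_der2 (c2 c3 x : R) :
  is_derive x 1 (fun t => - sin t * c2 + cos t * c3) (- cos x * c2 + - sin x * c3).
Proof.
have H := is_deriveD (scal_der c2 (is_deriveN (is_derive_sin x)))
  (scal_der c3 (is_derive_cos x)).
exact: H.
Qed.

Lemma mxvE (A : 'M[R]_N) (w : V) l : mxv A w 0 l = \sum_k A l k * w 0 k.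
Proof. by rewrite /mxv mxE. Qed.

Lemma hessE i (x : V) k l : hess_block blk f i x k l =
  if (blk k == Some i) && (blk l == Some i) then partial (partial f l) k x else 0.
Proof. by rewrite mxE. Qed.

Lemma unit_dom (v : V) : (forall j, norm2 (blockvec blk (Some j) v) = 1) -> dom v.
Proof.
move=> hv j; apply/eqP => E; have := hv j; rewrite E norm2_0 => /eqP.
by rewrite eq_sym oner_eq0.
Qed.

Lemma normalized_bound i (v : V) (Lii : R) :
  (forall v, (forall j, norm2 (blockvec blk (Some j) v) = 1) ->
     specnorm (hess_block blk f i v) <= Lii) ->
  (forall j, norm2 (blockvec blk (Some j) v) = 1) ->
  norm2 (grad_block blk f i v) <= pi * Lii.
Proof.
move=> HL hv.
have dv := unit_dom hv.
have L0 : 0 <= Lii := le_trans (specnorm_ge0 (hess_block blk f i v) (hv i)) (HL v hv).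
set G := grad_block blk f i v.
have [G0|Gn0] := eqVneq G 0.
  by rewrite G0 norm2_0 mulr_ge0 // pi_ge0.
set g := norm2 G.
have g0 : 0 < g.
  rewrite lt_neqAle norm2_ge0 andbT eq_sym; apply/eqP => /norm2_eq0 H.
  by rewrite H eqxx in Gn0.
set u := blockvec blk (Some i) v.
set d := g^-1 *: G.
have Su : \sum_k u 0 k ^+ 2 = 1 by apply/norm2_eq1; exact: hv.
have Sd : \sum_k d 0 k ^+ 2 = 1.
  by apply/norm2_eq1; rewrite /d norm2Z ger0_norm ?invr_ge0 ?ltW // mulVf // gt_eqF.
have Sud : \sum_k u 0 k * d 0 k = 0.
  have E := euler i dv.
  transitivity (g^-1 * \sum_k partial f k v * (if blk k == Some i then v 0 k else 0));
    last by rewrite E mulr0.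
  rewrite mulr_sumr; apply: eq_bigr => k _; rewrite /u /d /G !mxE.
  by case: ifP => _; rewrite ?mulr0 ?mul0r //; ring.
have out k : blk k != Some i -> u 0 k = 0 /\ d 0 k = 0.
  by move=> /negPf bk; rewrite /u /d /G !mxE bk mulr0.
have uin k : blk k == Some i -> u 0 k = v 0 k by move=> bk; rewrite /u mxE bk.
have psi0sum : \sum_k partial f k v * d 0 k = g.
  transitivity (g^-1 * \sum_k G 0 k ^+ 2).
    rewrite mulr_sumr; apply: eq_bigr => k _; rewrite /d /G !mxE.
    by case: ifP => _; rewrite ?mulr0 ?expr0n //=; ring.
  by rewrite -norm2_sq -/g expr2 mulKf // gt_eqF.
clearbody u d.
pose P (t : R) : V := v - u + cos t *: u + sin t *: d.
pose dP (t : R) : V := (- sin t) *: u + cos t *: d.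
pose ddP (t : R) : V := (- cos t) *: u + (- sin t) *: d.
have dPk (t : R) k : is_derive t 1 (fun s => P s 0 k) (dP t 0 k).
  have -> : (fun s => P s 0 k) = (fun s => (v 0 k - u 0 k) + cos s * u 0 k + sin s * d 0 k).
    by apply/funext => s; rewrite /P !mxE.
  by rewrite /dP !mxE; exact: trig_der.
have ddPk (t : R) k : is_derive t 1 (fun s => dP s 0 k) (ddP t 0 k).
  have -> : (fun s => dP s 0 k) = (fun s => - sin s * u 0 k + cos s * d 0 k).
    by apply/funext => s; rewrite /dP !mxE.
  by rewrite /ddP !mxE; exact: trig_der2.
have hP t j : norm2 (blockvec blk (Some j) (P t)) = 1.
  case: (eqVneq j i) => [->|ji].
    apply/norm2_eq1.
    transitivity (\sum_k (cos t * u 0 k + sin t * d 0 k) ^+ 2).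
      apply: eq_bigr => k _; rewrite /P !mxE.
      case: (eqVneq (blk k) (Some i)) => bk.
        by rewrite ?bk ?eqxx (uin k (introT eqP bk)) subrr add0r.
      rewrite ?(negPf bk); have [-> ->] := out k bk.
      by rewrite !mulr0 addr0 expr0n.
    by rewrite quad_sum Su Sd Sud !mulr1 mulr0 addr0 cos2Dsin2.
  rewrite -(hv j); congr norm2; apply/rowP => k; rewrite /P !mxE.
  case: (eqVneq (blk k) (Some j)) => bk; last by rewrite ?(negPf bk).
  have bki : blk k != Some i by rewrite bk; apply/eqP => -[] /eqP; rewrite (negPf ji).
  have [-> ->] := out k bki.
  by rewrite ?bk ?eqxx subr0 !mulr0 !addr0.
have domP t : dom (P t) := unit_dom (hP t).
have ndP t : norm2 (dP t) = 1.
  apply/norm2_eq1.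
  transitivity (\sum_k (- sin t * u 0 k + cos t * d 0 k) ^+ 2).
    by apply: eq_bigr => k _; rewrite /dP !mxE.
  by rewrite quad_sum Su Sd Sud !mulr1 mulr0 addr0 sqrrN addrC cos2Dsin2.
have dPout t k : blk k != Some i -> dP t 0 k = 0.
  by move=> bk; have [uk dk] := out k bk; rewrite /dP !mxE uk dk !mulr0 addr0.
have ddPE t k : ddP t 0 k = - (if blk k == Some i then P t 0 k else 0).
  rewrite /ddP /P !mxE.
  case: (eqVneq (blk k) (Some i)) => bk.
    by rewrite ?bk ?eqxx (uin k (introT eqP bk)) subrr add0r; ring.
  by rewrite ?(negPf bk); have [-> ->] := out k bk; rewrite !mulr0 addr0 oppr0.
pose psi (t : R) := \sum_k partial f k (P t) * dP t 0 k.
pose psi' (t : R) := \sum_k ((\sum_l partial (partial f k) l (P t) * dP t 0 l) * dP t 0 k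
                            + partial f k (P t) * ddP t 0 k).
have Hphi (t : R) : is_derive t 1 (f \o P) (psi t) := chain_f (domP t) (dPk t).
have Hpsi (t : R) : is_derive t 1 psi (psi' t).
  apply: is_derive_sumf => k.
  have H := is_derive_mulf (chain_pf k (domP t) (dPk t)) (ddPk t k).
  by apply: (is_derive_eq H); rewrite /=; ring.
have Hb (t : R) : `|psi' t| <= Lii.
  rewrite /psi' big_split /=.
  have -> : \sum_k partial f k (P t) * ddP t 0 k = 0.
    transitivity (- \sum_k partial f k (P t) * (if blk k == Some i then P t 0 k else 0)).
      by rewrite -sumrN; apply: eq_bigr => k _; rewrite ddPE mulrN.
    by rewrite euler // oppr0.
  rewrite addr0.
  set H := hess_block blk f i (P t).
  have -> : \sum_k (\sum_l partial (partial f k) l (P t) * dP t 0 l) * dP t 0 k =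
      \sum_l dP t 0 l * mxv H (dP t) 0 l.
    under eq_bigr do rewrite mulr_suml.
    rewrite exchange_big /=; apply: eq_bigr => l _; rewrite mxvE mulr_sumr.
    apply: eq_bigr => k _; rewrite /H hessE.
    case: (eqVneq (blk l) (Some i)) => bl; last by rewrite (dPout t l bl); ring.
    case: (eqVneq (blk k) (Some i)) => bk; last by rewrite (dPout t k bk); ring.
    rewrite ?bl ?bk ?eqxx /=; ring.
  apply: le_trans (dot_le (dP t) (mxv H (dP t))) _.
  rewrite ndP mul1r; apply: le_trans (specnorm_ub H (ndP t)) _.
  exact: HL (hP t).
have pi0 : 0 < (pi : R) := pi_gt0 R.
have [th thI Hth] : exists2 th, th \in `]- pi, pi[%R & is_derive th 1 (f \o P) 0.
  apply: Rolle.
  - lra.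
  - by move=> x _; case: (Hphi x).
  - by apply: derivable_within_continuous => x _; case: (Hphi x).
  - by rewrite /= /P cosN sinN sinpi oppr0.
have psith : psi th = 0 := is_derive_uniq (Hphi th) Hth.
have := @mvi R psi psi' th 0 Lii.
rewrite psith mulr0 subr0 sub0r normrN.
have -> : psi 0 = g.
  rewrite /psi /P /dP cos0 sin0 oppr0 !scale0r scale1r !addr0 add0r subrK.
  by rewrite scale1r; exact: psi0sum.
have gn : `|g| = g by rewrite ger0_norm // ltW.
rewrite gn => H.
have {}H : g <= Lii * `|th|.
  apply: H => t _; split; first exact: Hpsi.
  by rewrite subr0; exact: Hb.
apply: le_trans H _; rewrite mulrC ler_wpM2r //.
by move: thI; rewrite in_itv /= => /andP[h1 h2]; rewrite ler_norml; apply/andP; split; lra.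
Qed.

Lemma final i (Lii : R) :
  (forall v, (forall j, norm2 (blockvec blk (Some j) v) = 1) ->
     specnorm (hess_block blk f i v) <= Lii) ->
  forall x : V, dom x ->
    norm2 (grad_block blk f i x) <= pi * Lii / norm2 (blockvec blk (Some i) x).
Proof.
move=> HL x dx.
pose cs j := (norm2 (blockvec blk (Some j) x))^-1.
have nz j : 0 < norm2 (blockvec blk (Some j) x).
  rewrite lt_neqAle norm2_ge0 andbT eq_sym; apply/eqP => /norm2_eq0 H.
  by move: (dx j); rewrite H eqxx.
have cs0 j : 0 < cs j by rewrite invr_gt0.
set xh := scall cs (enum 'I_m) x.
have hv j : norm2 (blockvec blk (Some j) xh) = 1.
  have -> : blockvec blk (Some j) xh = cs j *: blockvec blk (Some j) x.
    apply/rowP => k; rewrite blockvecE scallT [RHS]mxE blockvecE.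
    case: (eqVneq (blk k) (Some j)) => bk; last by rewrite mulr0.
    by rewrite bk.
  by rewrite norm2Z ger0_norm ?ltW // mulVf // gt_eqF.
have gr : grad_block blk f i x = cs i *: grad_block blk f i xh.
  apply/rowP => k; rewrite !mxE.
  case: (eqVneq (blk k) (Some i)) => bk; last by rewrite mulr0.
  exact: grad_rel dx cs0 bk.
rewrite gr norm2Z (ger0_norm (ltW (cs0 i))) mulrC /cs ler_pM2r ?invr_gt0 //.
exact: normalized_bound HL hv.
Qed.

End M.

Unset Implicit Arguments.

Theorem lemmaA1 (R : realType) (m N : nat) (blk : 'I_N -> option 'I_m)
  (f : 'rV[R]_N -> R) (i : 'I_m) (Lii : R) :
  C2_on (dom_nz blk) f ->
  (forall (j : 'I_m) (c : R) (x : 'rV[R]_N), dom_nz blk x -> 0 < c ->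
     f (scale_block blk j c x) = f x) ->
  (forall v : 'rV[R]_N, (forall j : 'I_m, norm2 (blockvec blk (Some j) v) = 1) ->
     specnorm (hess_block blk f i v) <= Lii) ->
  forall x : 'rV[R]_N, dom_nz blk x ->
    norm2 (grad_block blk f i x) <= pi * Lii / norm2 (blockvec blk (Some i) x).
Proof.
move=> HC2 Hinv HL x dx.
exact: (final HC2 Hinv HL dx).
Qed.
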